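(* Let $\phi:\mathsf S\to\mathsf T$ be a morphism in $\mathbf{TEmb}$, i.e. a morphism of polynomial endofunctors between two trees. Then each of the three component maps $\phi_0:S_0\to T_0$, $\phi_1:S_1\to T_1$, $\phi_2:S_2\to T_2$ is injective.
   Context: A polynomial endofunctor $\mathsf P=(P_0,P_1,P_2)$ is a diagram of sets $P_0\xleftarrow{s}P_2\xrightarrow{p}P_1\xrightarrow{t}P_0$ in which $p$ has finite fibres. A morphism $\alpha:\mathsf Q\to\mathsf P$ of polynomial endofunctors is a triple of maps $\alpha_0:Q_0\to P_0$, $\alpha_1:Q_1\to P_1$, $\alpha_2:Q_2\to P_2$ commuting with $s,p,t$ and such that the middle square ($Q_2\to Q_1$ over $P_2\to P_1$) is a pullback; these form the category $\mathbf{PolyEnd}$. A tree is a polynomial endofunctor $\mathsf T$ such that (1) $T_0,T_1,T_2$ are finite; (2) $t$ is injective; (3) $s$ is injective and $T_0\setminus s(T_2)$ is a single element, called the root (so $T_0=T_2+\{\mathrm{root}\}$); (4) with $\sigma:T_0\to T_0$ defined by $\sigma(\mathrm{root})=\mathrm{root}$ and $\sigma(e)=t(p(e))$ for $e\in T_2$, for every $x\in T_0$ there is $k\in\mathbb N$ with $\sigma^k(x)=\mathrm{root}$. Elements of $T_0$ are edges, of $T_1$ nodes; input edges of a node $b$ are the elements of $p^{-1}(b)$, $t(b)$ is its output edge. $\mathbf{TEmb}$ is the full subcategory of $\mathbf{PolyEnd}$ whose objects are trees. *)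

(* Defs.v *)
From Stdlib Require Import List.
Set Implicit Arguments.

(* A polynomial endofunctor P0 <-s- P2 -p-> P1 -t-> P0, with p having finite fibres. *)
Record PolyEnd := {
  E0 : Type; E1 : Type; E2 : Type;
  src : E2 -> E0;
  prj : E2 -> E1;
  tgt : E1 -> E0;
  prj_finite_fibres : forall b : E1,
      exists l : list E2, forall e : E2, prj e = b -> In e l }.

(* Morphism of polynomial endofunctors: three maps commuting with s, p, t,
   with the middle square (Q2 -> Q1 over P2 -> P1) a pullback. *)
Record PolyMor (Q P : PolyEnd) := {
  m0 : E0 Q -> E0 P;
  m1 : E1 Q -> E1 P;
  m2 : E2 Q -> E2 P;
  m_src : forall e, m0 (src Q e) = src P (m2 e);
  m_prj : forall e, m1 (prj Q e) = prj P (m2 e);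
  m_tgt : forall b, m0 (tgt Q b) = tgt P (m1 b);
  m_pullback : forall (b : E1 Q) (e : E2 P), prj P e = m1 b ->
      exists e' : E2 Q, prj Q e' = b /\ m2 e' = e /\
        (forall e'' : E2 Q, prj Q e'' = b -> m2 e'' = e -> e'' = e') }.

Definition finite_type (X : Type) : Prop := exists l : list X, forall x : X, In x l.



(* x reaches r by iterating sigma : x = s e |-> t (p e), i.e. sigma^k x = r for some k,
   where sigma r = r. *)
Inductive reaches (T : PolyEnd) (r : E0 T) : E0 T -> Prop :=
  | reaches_root : reaches T r r
  | reaches_step : forall e : E2 T,
      reaches T r (tgt T (prj T e)) -> reaches T r (src T e).

Definition is_root (T : PolyEnd) (r : E0 T) : Prop :=
  (forall e : E2 T, src T e <> r) /\
  (forall x : E0 T, (forall e : E2 T, src T e <> x) -> x = r).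

Definition is_tree (T : PolyEnd) : Prop :=
  finite_type (E0 T) /\ finite_type (E1 T) /\ finite_type (E2 T) /\
  (forall b b' : E1 T, tgt T b = tgt T b' -> b = b') /\
  (forall e e' : E2 T, src T e = src T e' -> e = e') /\
  exists r : E0 T, is_root T r /\ forall x : E0 T, reaches T r x.

(* Main.v *)
Require Import Defs.
From Stdlib Require Import Lia.

Inductive rn (T : PolyEnd) (r : E0 T) : nat -> E0 T -> Prop :=
  | rn0 : rn T r 0 r
  | rnS : forall n e, rn T r n (tgt T (prj T e)) -> rn T r (S n) (src T e).

Lemma reaches_rn T r x : reaches T r x -> exists n, rn T r n x.
Proof. induction 1 as [|e _ [n H]]; eexists; constructor; eauto. Qed.

Lemma rn_uniq T r (Hr : forall e, src T e <> r)
  (Hs : forall e e', src T e = src T e' -> e = e') :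
  forall n z, rn T r n z -> forall m, rn T r m z -> n = m.
Proof.
  induction 1 as [|n e H IH]; intros m Hm; inversion Hm; subst.
  - reflexivity.
  - exfalso; eapply Hr; eauto.
  - exfalso; eapply Hr; eauto.
  - match goal with H : src T _ = src T _ |- _ => apply Hs in H; subst end.
    f_equal; eauto.
Qed.

Lemma rn_map S T (phi : PolyMor S T) rS rT k :
  rn T rT k (m0 phi rS) ->
  forall n x, rn S rS n x -> rn T rT (n + k) (m0 phi x).
Proof.
  intros Hk; induction 1 as [|n e H IH]; simpl; auto.
  rewrite m_src; constructor. rewrite m_tgt, m_prj in IH. exact IH.
Qed.

Lemma main_inj S T (phi : PolyMor S T) rS
  (HsT : forall e e', src T e = src T e' -> e = e')
  (HtS : forall b b', tgt S b = tgt S b' -> b = b') :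
  forall n x y, rn S rS n x -> rn S rS n y -> m0 phi x = m0 phi y -> x = y.
Proof.
  induction n; intros x y Hx Hy E; inversion Hx; inversion Hy; subst; auto.
  rename e into e1, e0 into e2.
  rewrite !m_src in E. apply HsT in E.
  assert (Ht : tgt S (prj S e1) = tgt S (prj S e2)).
  { apply IHn; auto. rewrite !m_tgt, !m_prj, E. reflexivity. }
  apply HtS in Ht.
  destruct (m_pullback phi (prj S e1) (m2 phi e1)) as [e' [_ [_ U]]].
  { rewrite m_prj; reflexivity. }
  rewrite (U e1), (U e2); auto.
Qed.

Theorem mainTheorem1 (S T : PolyEnd) (HS : is_tree S) (HT : is_tree T)
  (phi : PolyMor S T) :
  (forall x y : E0 S, m0 phi x = m0 phi y -> x = y) /\
  (forall x y : E1 S, m1 phi x = m1 phi y -> x = y) /\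
  (forall x y : E2 S, m2 phi x = m2 phi y -> x = y).
Proof.
  destruct HS as (_ & _ & _ & HtS & HsS & rS & [HrS _] & HreS).
  destruct HT as (_ & _ & _ & HtT & HsT & rT & [HrT _] & HreT).
  assert (I0 : forall x y : E0 S, m0 phi x = m0 phi y -> x = y).
  { intros x y E.
    destruct (reaches_rn _ _ _ (HreS x)) as [nx Hx].
    destruct (reaches_rn _ _ _ (HreS y)) as [ny Hy].
    destruct (reaches_rn _ _ _ (HreT (m0 phi rS))) as [k Hk].
    pose proof (@rn_map _ _ phi _ _ _ Hk _ _ Hx) as Ax.
    pose proof (@rn_map _ _ phi _ _ _ Hk _ _ Hy) as Ay.
    rewrite E in Ax.
    pose proof (rn_uniq _ _ HrT HsT _ _ Ax _ Ay).
    assert (nx = ny) by lia; subst.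
    eapply (@main_inj _ _ phi rS HsT HtS); eauto. }
  split; [exact I0|split].
  - intros x y E. apply HtS, I0. rewrite !m_tgt, E. reflexivity.
  - intros x y E. apply HsS, I0. rewrite !m_src, E. reflexivity.
Qed.
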